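(* For the hypergeometric weights described in the context, the diagonal matrices of recursion coefficients satisfy the Toda-type system \[ \vartheta\alpha=\beta-\mathfrak a_{+}\beta,\qquad \vartheta\beta=\gamma-\mathfrak a_{+}\gamma+\beta(\mathfrak a_{-}\alpha-\alpha),\qquad \vartheta\gamma=\gamma(\mathfrak a_{-}^2\alpha-\alpha). \]
   Context: Weights on $\mathbb N_0$: $w^{(a)}(k)=\frac{(b^{(a)}_1)_k\cdots(b^{(a)}_{M^{(a)}})_k}{(c_1)_k\cdots(c_N)_k}\frac{(\eta^{(a)})^k}{k!}$, $a\in\{1,2\}$, with convergent series. Moment matrix (indices from 0): $\mathscr M_{n,2m}=\sum_k k^{n+m}w^{(1)}(k)$, $\mathscr M_{n,2m+1}=\sum_k k^{n+m}w^{(2)}(k)$, with all leading principal minors nonzero, so $\mathscr M=S^{-1}H\tilde S^{-\top}$ ($S,\tilde S$ lower unitriangular, $H$ diagonal), depending on $(\eta^{(1)},\eta^{(2)})$. With $\Lambda$ the matrix with ones on the first superdiagonal, $T=S\Lambda S^{-1}=(\Lambda^\top)^2\gamma+\Lambda^\top\beta+\alpha+\Lambda$ where $\alpha=\operatorname{diag}(\alpha_0,\alpha_1,\dots)$, $\beta=\operatorname{diag}(\beta_1,\beta_2,\dots)$, $\gamma=\operatorname{diag}(\gamma_2,\gamma_3,\dots)$ (equivalently $xB_n=B_{n+1}+\alpha_nB_n+\beta_nB_{n-1}+\gamma_nB_{n-2}$ for the entries $B_n$ of $S(1,x,x^2,\dots)^\top$). For a diagonal matrix, $\mathfrak a_-\operatorname{diag}(m_0,m_1,\dots)=\operatorname{diag}(m_1,m_2,\dots)$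 and $\mathfrak a_+\operatorname{diag}(m_0,m_1,\dots)=\operatorname{diag}(0,m_0,m_1,\dots)$. $\vartheta=\eta^{(1)}\partial/\partial\eta^{(1)}+\eta^{(2)}\partial/\partial\eta^{(2)}$. *)

(* Defs.v *)
From HB Require Import structures.
From mathcomp Require Import all_boot all_order all_algebra.
From mathcomp Require Import all_classical all_reals all_analysis.
Set Implicit Arguments. Unset Strict Implicit. Unset Printing Implicit Defensive.
Import Order.TTheory GRing.Theory Num.Theory.
Import numFieldNormedType.Exports.
Local Open Scope ring_scope.

Section Defs.
Variable R : realType.

Definition poch (b : R) (k : nat) : R := \prod_(i < k) (b + i%:R).

Definition hweight (bs cs : seq R) (eta : R) (k : nat) : R :=
  (\prod_(b <- bs) poch b k) / (\prod_(c <- cs) poch c k) * eta ^+ k / (k`!)%:R.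

Definition mom_term (bs cs : seq R) (eta : R) (p : nat) (k : nat) : R :=
  (k%:R) ^+ p * hweight bs cs eta k.

Definition moment (b1 b2 cs : seq R) (eta1 eta2 : R) (n j : nat) : R :=
  if odd j then limn (series (mom_term b2 cs eta2 (n + j./2)))
  else limn (series (mom_term b1 cs eta1 (n + j./2))).

Definition lead_block (A : nat -> nat -> R) (N : nat) : 'M[R]_N :=
  \matrix_(i < N, j < N) A i j.

Definition lower_unitriangular (A : nat -> nat -> R) : Prop :=
  (forall n m, (n < m)%N -> A n m = 0) /\ (forall n, A n n = 1).

(* M = S^{-1} H Stilde^{-T}, written in the equivalent finite-sum form
   S M Stilde^T = diag(H) (all sums are finite since S, Stilde are lower
   triangular). *)
Definition gauss_borel (M S St : nat -> nat -> R) (H : nat -> R) : Prop :=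
  lower_unitriangular S /\ lower_unitriangular St /\
  forall n m, \sum_(j < m.+1) \sum_(k < n.+1) S n k * M k j * St m j
              = (if n == m then H n else 0).

(* Entries of the inverse of a lower unitriangular infinite matrix, read off
   from the inverse of a leading block (the leading blocks of S^{-1} are the
   inverses of the leading blocks of S). *)
Definition tri_inv (A : nat -> nat -> R) (i j : nat) : R :=
  (invmx (lead_block A (maxn i j).+1)) (inord i) (inord j).

(* T = S Lambda S^{-1}, Lambda = ones on the first superdiagonal:
   (S Lambda)_{n,j} = S_{n,j-1}, so T_{n,m} = sum_{k<=n} S_{n,k} (S^{-1})_{k+1,m}. *)
Definition Tmat (S : nat -> nat -> R) (n m : nat) : R :=
  \sum_(k < n.+1) S n k * tri_inv S k.+1 m.

(* recursion coefficients: T = (Lambda^T)^2 gamma + Lambda^T beta + alpha + Lambda *)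
Definition rec_alpha (S : nat -> nat -> R) (n : nat) : R := Tmat S n n.
(* beta_n for n >= 1; the value 0 at n = 0 is the convention a_+ beta = diag(0,beta_1,...) *)
Definition rec_beta (S : nat -> nat -> R) (n : nat) : R :=
  if n is n'.+1 then Tmat S n n' else 0.
(* gamma_n for n >= 2; the value 0 at n = 1 is the convention a_+ gamma = diag(0,gamma_2,...) *)
Definition rec_gamma (S : nat -> nat -> R) (n : nat) : R :=
  if (n < 2)%N then 0 else Tmat S n (n - 2).

Definition theta_eq (f : R -> R -> R) (x y v : R) : Prop :=
  exists d1 d2 : R,
    is_derive x 1 (fun t => f t y) d1 /\
    is_derive y 1 (fun t => f x t) d2 /\
    x * d1 + y * d2 = v.

End Defs.

(* Main.v *)
Require Import Defs.
From HB Require Import structures.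
From mathcomp Require Import all_boot all_order all_algebra.
From mathcomp Require Import all_classical all_reals all_analysis.
From mathcomp Require Import ring lra.
Set Implicit Arguments. Unset Strict Implicit. Unset Printing Implicit Defensive.
Import Order.TTheory GRing.Theory Num.Theory.
Import numFieldNormedType.Exports.
Local Open Scope ring_scope.
Local Open Scope classical_set_scope.
Local Open Scope ring_scope.
Section Theta.
Variable R : realType.
Variables (U : set (R * R)) (e1 e2 : R).
Hypotheses (Uo : open U) (Ue : U (e1, e2)).

Lemma U_ball : exists2 d : R, 0 < d &
  forall t s, `|e1 - t| < d -> `|e2 - s| < d -> U (t, s).
Proof.
have : nbhs (e1, e2) U by exact: Uo.
move=> /nbhs_ballP[d d0 Hd]; exists d => // t s h1 h2.
apply: Hd; split => //=.
Qed.

Lemma U_near1 : \forall t \near e1, U (t, e2).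
Proof.
have [d d0 Hd] := U_ball; apply/nbhs_ballP; exists d => // t /= Ht.
by apply: Hd => //; rewrite subrr normr0.
Qed.

Lemma U_near2 : \forall t \near e2, U (e1, t).
Proof.
have [d d0 Hd] := U_ball; apply/nbhs_ballP; exists d => // t /= Ht.
by apply: Hd => //; rewrite subrr normr0.
Qed.

Definition th (f : R -> R -> R) v := theta_eq f e1 e2 v.

Lemma th_ext f g v : (forall x y, U (x, y) -> f x y = g x y) -> th f v -> th g v.
Proof.
move=> fg [d1 [d2 [h1 [h2 h3]]]]; exists d1, d2; split; [|split] => //.
  apply: near_eq_is_derive h1; near=> t; apply: fg; near: t; exact: U_near1.
apply: near_eq_is_derive h2; near=> t; apply: fg; near: t; exact: U_near2.
Unshelve. all: by end_near.
Qed.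

Lemma th_cst c : th (fun _ _ => c) 0.
Proof.
exists 0, 0; split; [|split]; last by rewrite !mulr0 addr0.
  exact: is_derive_cst.
exact: is_derive_cst.
Qed.

Lemma th_add f g v w : th f v -> th g w -> th (fun x y => f x y + g x y) (v + w).
Proof.
move=> [d1 [d2 [h1 [h2 h3]]]] [d1' [d2' [h1' [h2' h3']]]].
exists (d1 + d1'), (d2 + d2'); split; [|split].
- exact: is_deriveD.
- exact: is_deriveD.
- by rewrite -h3 -h3'; ring.
Qed.

Lemma th_opp f v : th f v -> th (fun x y => - f x y) (- v).
Proof.
move=> [d1 [d2 [h1 [h2 h3]]]].
exists (- d1), (- d2); split; [|split].
- exact: is_deriveN.
- exact: is_deriveN.
- by rewrite -h3; ring.
Qed.

Lemma th_mul f g v w : th f v -> th g w ->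
  th (fun x y => f x y * g x y) (f e1 e2 * w + g e1 e2 * v).
Proof.
move=> [d1 [d2 [h1 [h2 h3]]]] [d1' [d2' [h1' [h2' h3']]]].
exists (f e1 e2 * d1' + g e1 e2 * d1), (f e1 e2 * d2' + g e1 e2 * d2); split; [|split].
- exact: is_deriveM.
- exact: is_deriveM.
- by rewrite -h3 -h3'; ring.
Qed.

Lemma th_inv f v : f e1 e2 != 0 -> th f v ->
  th (fun x y => (f x y)^-1) (- (f e1 e2) ^- 2 * v).
Proof.
move=> f0 [d1 [d2 [h1 [h2 h3]]]].
exists (- (f e1 e2) ^- 2 *: d1), (- (f e1 e2) ^- 2 *: d2); split; [|split].
- exact: is_deriveV.
- exact: is_deriveV.
- by rewrite -h3 /GRing.scale /=; ring.
Qed.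

Lemma th_uniq f v w : th f v -> th f w -> v = w.
Proof.
move=> [d1 [d2 [h1 [h2 h3]]]] [d1' [d2' [h1' [h2' h3']]]].
rewrite -h3 -h3'.
move: h1 h1' h2 h2' => [_ <-] [_ <-] [_ <-] [_ <-].
by [].
Qed.

Definition thable f := exists v, th f v.

Lemma th_eqf f g v : (forall x y, f x y = g x y) -> th f v -> th g v.
Proof.
move=> fg; have -> : g = f by apply/funext => x; apply/funext => y; rewrite fg.
by [].
Qed.

Lemma th_sum (I : Type) (r : seq I) (P : pred I) (F : I -> R -> R -> R) dF :
  (forall i, th (F i) (dF i)) ->
  th (fun x y => \sum_(i <- r | P i) F i x y) (\sum_(i <- r | P i) dF i).
Proof.
move=> hF; elim: r => [|a r IH].
  rewrite big_nil; apply: th_eqf (th_cst 0) => x y; by rewrite big_nil.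
rewrite big_cons; case: ifP => Pa.
  apply: th_eqf (th_add (hF a) IH) => x y; by rewrite big_cons Pa.
apply: th_eqf IH => x y; by rewrite big_cons Pa.
Qed.

Lemma thable_sum (I : Type) (r : seq I) (P : pred I) (F : I -> R -> R -> R) :
  (forall i, thable (F i)) -> thable (fun x y => \sum_(i <- r | P i) F i x y).
Proof.
move=> hF; elim: r => [|a r [v IH]].
  exists 0; apply: th_eqf (th_cst 0) => x y; by rewrite big_nil.
case Pa: (P a).
  have [w hw] := hF a; exists (w + v).
  apply: th_eqf (th_add hw IH) => x y; by rewrite big_cons Pa.
exists v; apply: th_eqf IH => x y; by rewrite big_cons Pa.
Qed.

Lemma thable_prod (I : Type) (r : seq I) (P : pred I) (F : I -> R -> R -> R) :
  (forall i, thable (F i)) -> thable (fun x y => \prod_(i <- r | P i) F i x y).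
Proof.
move=> hF; elim: r => [|a r [v IH]].
  exists 0; apply: th_eqf (th_cst 1) => x y; by rewrite big_nil.
case Pa: (P a).
  have [w hw] := hF a; eexists.
  apply: th_eqf (th_mul hw IH) => x y; by rewrite big_cons Pa.
exists v; apply: th_eqf IH => x y; by rewrite big_cons Pa.
Qed.

Lemma thable_mul f g : thable f -> thable g -> thable (fun x y => f x y * g x y).
Proof. by move=> [v hv] [w hw]; eexists; exact: th_mul hv hw. Qed.
Lemma thable_add f g : thable f -> thable g -> thable (fun x y => f x y + g x y).
Proof. by move=> [v hv] [w hw]; eexists; exact: th_add hv hw. Qed.
Lemma thable_opp f : thable f -> thable (fun x y => - f x y).
Proof. by move=> [v hv]; eexists; exact: th_opp hv. Qed.
Lemma thable_cst c : thable (fun _ _ => c).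
Proof. by eexists; exact: th_cst. Qed.
Lemma thable_inv f : f e1 e2 != 0 -> thable f -> thable (fun x y => (f x y)^-1).
Proof. by move=> f0 [v hv]; eexists; exact: th_inv hv. Qed.
Lemma thable_ext f g : (forall x y, U (x, y) -> f x y = g x y) -> thable f -> thable g.
Proof. by move=> fg [v hv]; exists v; exact: th_ext hv. Qed.

End Theta.
Section ThetaMx.
Variable R : realType.
Variables (U : set (R * R)) (e1 e2 : R).
Hypotheses (Uo : open U) (Ue : U (e1, e2)).
Local Notation thable := (thable e1 e2).

Lemma thable_det N (A : R -> R -> 'M[R]_N) :
  (forall i j, thable (fun x y => A x y i j)) -> thable (fun x y => \det (A x y)).
Proof.
move=> hA; rewrite /determinant.
apply: thable_sum => s; apply: thable_mul; first exact: thable_cst.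
by apply: thable_prod => i; exact: hA.
Qed.

Lemma thable_invmx N (A : R -> R -> 'M[R]_N) :
  (forall i j, thable (fun x y => A x y i j)) ->
  (forall x y, U (x, y) -> A x y \in unitmx) ->
  forall i j, thable (fun x y => invmx (A x y) i j).
Proof.
move=> hA hU i j.
apply: (thable_ext Uo Ue (f := fun x y => (\det (A x y))^-1 *
   ((-1) ^+ (j + i) * \det (row' j (col' i (A x y)))))).
  move=> x y Uxy; rewrite /invmx hU // mxE /adjugate mxE /cofactor.
  by [].
apply: thable_mul.
  apply: thable_inv; last exact: thable_det.
  by have := hU _ _ Ue; rewrite unitmxE unitfE.
apply: thable_mul; first exact: thable_cst.
apply: thable_det => k l.
apply: (thable_ext Uo Ue (f := fun x y => A x y (lift j k) (lift i l))).
  by move=> x y _; rewrite !mxE.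
exact: hA.
Qed.

End ThetaMx.
Section Mom.
Variable R : realType.

Lemma series_shift (u : R^nat) : cvgn (series u) ->
  series (fun n => u n.+1) @ \oo --> limn (series u) - u 0%N.
Proof.
move=> cu.
have -> : series (fun n => u n.+1) = (fun n => series u n.+1 - u 0%N).
  apply/funext => n; rewrite !seriesEord /= big_ord_recl /=.
  rewrite addrC addKr; by [].
apply: cvgB; last exact: cvg_cst.
by rewrite (cvg_shiftS (series u)).
Qed.

Lemma is_cvg_series_shift (u : R^nat) : cvgn (series u) ->
  cvgn (series (fun n => u n.+1)).
Proof. by move=> cu; apply/cvg_ex; eexists; exact: series_shift. Qed.

Lemma cvg_series_scale (f : R^nat) (k : R) : cvgn (series f) ->
  cvgn (series (fun n => k * f n)).
Proof.
move=> cf0.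
have -> : series (fun n => k * f n) = (fun N => k * series f N).
  by apply/funext => N; rewrite !seriesEord /= mulr_sumr.
apply/cvg_ex; exists (k * limn (series f)); exact: cvgMl_tmp.
Qed.

Lemma cvg_series_sub (f g : R^nat) : cvgn (series f) -> cvgn (series g) ->
  cvgn (series (fun n => f n - g n)).
Proof.
move=> cf0 cg0.
have -> : series (fun n => f n - g n) = (fun N => series f N - series g N).
  by apply/funext => N; rewrite !seriesEord /= sumrB.
apply/cvg_ex; exists (limn (series f) - limn (series g)); exact: cvgB.
Qed.

Variables (b cs : seq R).

Definition cf (p k : nat) : R := (k%:R) ^+ p *
  ((\prod_(b0 <- b) poch b0 k) / (\prod_(c0 <- cs) poch c0 k) / (k`!)%:R).

Lemma mom_termE p t k : mom_term b cs t p k = cf p k * t ^+ k.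
Proof. rewrite /mom_term /hweight /cf; ring. Qed.

Lemma pseriesE p t : series (mom_term b cs t p) = pseries (cf p) t.
Proof.
have -> : mom_term b cs t p = (fun i => cf p i * t ^+ i).
  by apply/funext => k; rewrite mom_termE.
by [].
Qed.

Lemma cf_S p k : cf p.+1 k = k%:R * cf p k.
Proof. by rewrite /cf exprS; ring. Qed.

Lemma diffs1 p : pseries_diffs (cf p) = fun n => cf p.+1 n.+1.
Proof. by apply/funext => n; rewrite /pseries_diffs cf_S. Qed.

Lemma diffs2 p : pseries_diffs (pseries_diffs (cf p)) =
  fun n => cf p.+2 n.+2 - cf p.+1 n.+2.
Proof.
apply/funext => n; rewrite diffs1 /pseries_diffs (cf_S p.+1 n.+2).
rewrite -[n.+2]addn1 natrD /=; ring.
Qed.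

Lemma mom_deriv (p : nat) (x K : R) : `|x| < `|K| ->
  (forall q, cvgn (series (mom_term b cs K q))) ->
  exists d : R, is_derive x (1 : R) (fun t : R => limn (series (mom_term b cs t p))) d /\
            x * d = limn (series (mom_term b cs x p.+1)).
Proof.
move=> xK hK.
have K0 : K != 0.
  by apply/eqP => K0; move: xK; rewrite K0 normr0 ltNge normr_ge0.
have hc q : cvgn (pseries (cf q) K) by rewrite -pseriesE.
have h1 : cvgn (pseries (pseries_diffs (cf p)) K).
  have -> : pseries (pseries_diffs (cf p)) K =
     series (fun n => K^-1 * (cf p.+1 n.+1 * K ^+ n.+1)).
    congr (series _); apply/funext => n.
    change (pseries_diffs (cf p) n * K ^+ n = K^-1 * (cf p.+1 n.+1 * K ^+ n.+1)).
    by rewrite diffs1 exprS; field.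
  apply: (cvg_series_scale (f := fun n => cf p.+1 n.+1 * K ^+ n.+1)).
  apply: (is_cvg_series_shift (u := fun n => cf p.+1 n * K ^+ n)).
  exact: hc.
have h2 : cvgn (pseries (pseries_diffs (pseries_diffs (cf p))) K).
  have -> : pseries (pseries_diffs (pseries_diffs (cf p))) K =
     series (fun n => (K ^+ 2)^-1 * (cf p.+2 n.+2 * K ^+ n.+2
                                     - cf p.+1 n.+2 * K ^+ n.+2)).
    congr (series _); apply/funext => n.
    change (pseries_diffs (pseries_diffs (cf p)) n * K ^+ n = (K ^+ 2)^-1 *
      (cf p.+2 n.+2 * K ^+ n.+2 - cf p.+1 n.+2 * K ^+ n.+2)).
    by rewrite diffs2 !exprS; field; rewrite ?expf_neq0.
  apply: (cvg_series_scale (f := fun n => (cf p.+2 n.+2 * K ^+ n.+2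
                                     - cf p.+1 n.+2 * K ^+ n.+2))).
  apply: (is_cvg_series_shift (u := fun n => (cf p.+2 n.+1 * K ^+ n.+1
                                     - cf p.+1 n.+1 * K ^+ n.+1))).
  apply: (is_cvg_series_shift (u := fun n => (cf p.+2 n * K ^+ n
                                     - cf p.+1 n * K ^+ n))).
  apply: (cvg_series_sub (f := fun n => cf p.+2 n * K ^+ n) (g := fun n => cf p.+1 n * K ^+ n)).
    exact: hc.
  exact: hc.
have hd := pseries_snd_diffs (hc p) h1 h2 xK.
exists (limn (pseries (pseries_diffs (cf p)) x)); split.
  have -> : (fun t => limn (series (mom_term b cs t p))) = (fun t => limn (pseries (cf p) t)).
    by apply/funext => t; rewrite pseriesE.
  exact: hd.
have hx1 : cvgn (pseries (cf p.+1) x) by exact: is_cvg_pseries_inside (hc p.+1) xK.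
have hx2 : cvgn (pseries (pseries_diffs (cf p)) x) by exact: is_cvg_pseries_inside h1 xK.
have -> : x * limn (pseries (pseries_diffs (cf p)) x) =
    limn (x *: pseries (pseries_diffs (cf p)) x).
  by rewrite limZl_tmp.
have -> : x *: pseries (pseries_diffs (cf p)) x =
   series (fun n => cf p.+1 n.+1 * x ^+ n.+1).
  rewrite /pseries -seriesZ; congr series; apply/funext => n.
  rewrite diffs1 /= exprS; change (x * (cf p.+1 n.+1 * x ^+ n) = cf p.+1 n.+1 * (x * x ^+ n)); ring.
rewrite pseriesE.
have := series_shift (u := fun i => cf p.+1 i * x ^+ i) hx1.
move/(cvg_lim _) => -> //.
by rewrite /cf expr0n /= mul0r mul0r subr0.
Qed.

End Mom.
Section MomTheta.
Variable R : realType.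
Variables (U : set (R * R)) (e1 e2 : R).
Hypotheses (Uo : open U) (Ue : U (e1, e2)).
Variables (b1 b2 cs : seq R).
Hypothesis hconv : forall x y, U (x, y) -> forall p : nat,
  cvgn (series (mom_term b1 cs x p)) /\ cvgn (series (mom_term b2 cs y p)).

Lemma pick_K (z d : R) : 0 < d -> exists K : R, `|z - K| < d /\ `|z| < `|K|.
Proof.
move=> d0; have d20 : 0 < d / 2 by rewrite divr_gt0.
have hd2 : d / 2 < d by rewrite ltr_pdivrMr // ltr_pMr // ltr1n.
case: (lerP 0 z) => hz.
  exists (z + d / 2); have -> : z - (z + d / 2) = - (d / 2) by ring.
  rewrite normrN gtr0_norm //; split => //.
  rewrite (ger0_norm hz) (@ger0_norm _ (z + d / 2)); first lra.
  lra.
exists (z - d / 2); have -> : z - (z - d / 2) = d / 2 by ring.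
rewrite gtr0_norm //; split => //.
rewrite (ltr0_norm hz) (@ltr0_norm _ (z - d / 2)); first lra.
lra.
Qed.

Lemma th_moment i j :
  th e1 e2 (fun x y => moment b1 b2 cs x y i j) (moment b1 b2 cs e1 e2 i.+1 j).
Proof.
have [d d0 Hd] := U_ball Uo Ue.
rewrite /moment addSn; case: (odd j).
  have [K [hK1 hK2]] := pick_K e2 d0.
  have UK : U (e1, K) by apply: Hd => //; rewrite subrr normr0.
  have [dd [h1 h2]] := mom_deriv (b:=b2) (cs:=cs) (i + j./2) hK2 (fun q => (hconv UK q).2).
  exists 0, dd; split; [|split] => //; first exact: is_derive_cst.
  by rewrite mulr0 add0r.
have [K [hK1 hK2]] := pick_K e1 d0.
have UK : U (K, e2) by apply: Hd => //; rewrite subrr normr0.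
have [dd [h1 h2]] := mom_deriv (b:=b1) (cs:=cs) (i + j./2) hK2 (fun q => (hconv UK q).1).
exists dd, 0; split; [|split] => //; first exact: is_derive_cst.
by rewrite mulr0 addr0.
Qed.

End MomTheta.
Section TriInv.
Variable R : realType.

Lemma sum_restrict (n m : nat) (F : nat -> R) : (n <= m)%N ->
  (forall k, (n <= k)%N -> (k < m)%N -> F k = 0) ->
  \sum_(k < m) F k = \sum_(k < n) F k.
Proof.
move=> nm hF; rewrite -(big_mkord xpredT F) -(big_mkord xpredT F).
rewrite (@big_cat_nat _ _ _ n 0 m) //= [X in _ + X]big1_seq ?addr0 // => k /andP[_].
rewrite mem_index_iota => /andP[h1 h2]; exact: hF.
Qed.

Lemma sum_delta (F : nat -> R) (n j : nat) :
  \sum_(k < n) F k * ((k : nat) == j)%:R = if (j < n)%N then F j else 0.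
Proof.
case: ltnP => jn.
  rewrite (bigD1 (Ordinal jn)) //= eqxx mulr1 big1 ?addr0 // => k hk.
  case: eqP => e; last by rewrite mulr0.
  by move: hk; rewrite -val_eqE /= e eqxx.
rewrite big1 // => k _; case: eqP => e; last by rewrite mulr0.
by move: (ltn_ord k); rewrite e ltnNge jn.
Qed.

Lemma vec_zero N (c : nat -> R) (A : nat -> nat -> R) :
  \det (lead_block A N) != 0 ->
  (forall j, (j < N)%N -> \sum_(k < N) c k * A k j = 0) ->
  forall k, (k < N)%N -> c k = 0.
Proof.
move=> hA hc k kN.
set L := lead_block A N; have Lu : L \in unitmx by rewrite unitmxE unitfE.
pose v : 'rV[R]_N := \row_(i < N) c i.
have hv : v *m L = 0.
  apply/rowP => j; rewrite !mxE -[RHS](hc j (ltn_ord j)).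
  by apply: eq_bigr => i _; rewrite !mxE.
have : v = 0 by rewrite -(mulmxK Lu v) hv mul0mx.
by move/rowP/(_ (Ordinal kN)); rewrite !mxE.
Qed.

Variable s : nat -> nat -> R.
Hypothesis hs : lower_unitriangular s.

Lemma lead_trig N : is_trig_mx (lead_block s N).
Proof. by apply/is_trig_mxP => i j ij; rewrite mxE hs.1. Qed.

Lemma lead_det N : \det (lead_block s N) = 1.
Proof.
by rewrite det_trig ?lead_trig // big1 // => i _; rewrite mxE hs.2.
Qed.

Lemma lead_unit N : lead_block s N \in unitmx.
Proof. by rewrite unitmxE lead_det unitr1. Qed.

Local Notation Y N := (invmx (lead_block s N)).

Lemma Y_upper N (i j : 'I_N) : (i < j)%N -> Y N i j = 0.
Proof.
have hLY : lead_block s N *m Y N = 1%:M by rewrite mulmxV // lead_unit.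
suff H : forall k (i j : 'I_N), val i = k -> (i < j)%N -> Y N i j = 0 by exact: H.
elim/ltn_ind => k IH {}i {}j ik ij.
have := congr1 (fun A : 'M[R]_N => A i j) hLY; rewrite !mxE (bigD1 i) //= mxE hs.2 mul1r.
rewrite big1 ?addr0; last first.
  move=> l lneq; rewrite mxE; case: (ltngtP l i) => [li|il|e].
  - by rewrite (IH l) ?mulr0 // -?ik //; apply: ltn_trans ij.
  - by rewrite hs.1 // mul0r.
  - by move: lneq; rewrite -val_eqE /= e eqxx.
move=> ->; case: eqP => // e; move: ij; by rewrite e ltnn.
Qed.

Lemma Y_diag N (i : 'I_N) : Y N i i = 1.
Proof.
have hLY : lead_block s N *m Y N = 1%:M by rewrite mulmxV // lead_unit.
have := congr1 (fun A : 'M[R]_N => A i i) hLY; rewrite !mxE (bigD1 i) //= mxE hs.2 mul1r eqxx.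
rewrite big1 ?addr0 // => l lneq; rewrite mxE; case: (ltngtP l i) => [li|il|e].
- by rewrite Y_upper ?mulr0.
- by rewrite hs.1 // mul0r.
- by move: lneq; rewrite -val_eqE /= e eqxx.
Qed.

Definition yv N a b := Y N.+1 (inord a) (inord b).

Lemma Y_row N (i j : nat) : (i <= N)%N -> (j <= N)%N ->
  \sum_(k < i.+1) s i k * yv N k j = (i == j)%:R.
Proof.
move=> iN jN.
have hLY : lead_block s N.+1 *m Y N.+1 = 1%:M by rewrite mulmxV // lead_unit.
have := congr1 (fun A : 'M[R]_N.+1 => A (inord i) (inord j)) hLY; rewrite !mxE.
rewrite (_ : (inord i == inord j :> 'I_N.+1) = (i == j)); last first.
  by rewrite -val_eqE /= !inordK.
move=> <-.
transitivity (\sum_(k < N.+1) s i k * yv N k j).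
  symmetry; apply: (@sum_restrict i.+1 N.+1 (fun k => s i k * yv N k j)) => // k ik kN.
  by rewrite hs.1 ?mul0r.
apply: eq_bigr => k _; rewrite mxE inordK // /yv inord_val //.
Qed.

Lemma Y_rowL N (i j : nat) : (i <= N)%N -> (j <= N)%N ->
  \sum_(k < i.+1) yv N i k * s k j = (i == j)%:R.
Proof.
move=> iN jN.
have hYL : Y N.+1 *m lead_block s N.+1 = 1%:M by rewrite mulVmx // lead_unit.
have := congr1 (fun A : 'M[R]_N.+1 => A (inord i) (inord j)) hYL; rewrite !mxE.
rewrite (_ : (inord i == inord j :> 'I_N.+1) = (i == j)); last first.
  by rewrite -val_eqE /= !inordK.
move=> <-.
transitivity (\sum_(k < N.+1) yv N i k * s k j).
  symmetry; apply: (@sum_restrict i.+1 N.+1 (fun k => yv N i k * s k j)) => // k ik kN.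
  by rewrite /yv Y_upper ?mul0r // !inordK.
apply: eq_bigr => k _; rewrite mxE inordK // /yv inord_val //.
Qed.

Lemma yv_upper N i j : (i < j)%N -> (j <= N)%N -> yv N i j = 0.
Proof.
move=> ij jN; rewrite /yv Y_upper // !inordK //; apply: leq_trans (ltnW ij) _; done.
Qed.

Lemma yv_cons N M i j : (i <= N)%N -> (j <= N)%N -> (N <= M)%N ->
  yv N i j = yv M i j.
Proof.
move=> + jN NM; elim/ltn_ind: i => i IH iN.
have iM : (i <= M)%N by apply: leq_trans NM.
have jM : (j <= M)%N by apply: leq_trans NM.
have h1 := Y_row iN jN; have h2 := Y_row iM jM.
rewrite big_ord_recr /= hs.2 mul1r in h1.
rewrite big_ord_recr /= hs.2 mul1r in h2.
have -> : yv N i j = (i == j)%:R - \sum_(k < i) s i k * yv N k j.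
  by rewrite -h1; ring.
have -> : yv M i j = (i == j)%:R - \sum_(k < i) s i k * yv M k j.
  by rewrite -h2; ring.
congr (_ - _); apply: eq_bigr => k _; rewrite IH //.
by apply: leq_trans (ltnW (ltn_ord k)) iN.
Qed.

Lemma tri_invE N i j : (maxn i j <= N)%N -> tri_inv s i j = yv N i j.
Proof.
move=> hN; rewrite /tri_inv -/(yv (maxn i j) i j).
by apply: yv_cons => //; rewrite ?leq_maxl ?leq_maxr.
Qed.

Lemma tri_lower i j : (i < j)%N -> tri_inv s i j = 0.
Proof.
move=> ij; rewrite (@tri_invE (maxn i j)) // yv_upper // leq_maxr //.
Qed.

Lemma tri_diag i : tri_inv s i i = 1.
Proof.
rewrite (@tri_invE i) ?maxnn // /yv.
have -> : (inord i : 'I_i.+1) = ord_max by apply: val_inj; rewrite /= inordK.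
exact: Y_diag.
Qed.

Lemma tri_rowL i j : \sum_(m < i.+1) tri_inv s i m * s m j = (i == j)%:R.
Proof.
case: (leqP j i) => ji.
  rewrite -(Y_rowL (N := i)) //; apply: eq_bigr => m _.
  by rewrite (@tri_invE i) // geq_max leqnn -ltnS ltn_ord.
rewrite big1; first by case: eqP => // e; move: ji; rewrite e ltnn.
move=> m _; rewrite hs.1 ?mulr0 //; apply: leq_ltn_trans ji.
by rewrite -ltnS ltn_ord.
Qed.

Lemma T_up n m : (n.+1 < m)%N -> Tmat s n m = 0.
Proof.
move=> nm; rewrite /Tmat big1 // => k _; rewrite tri_lower ?mulr0 //.
by apply: leq_ltn_trans nm; rewrite ltnS -ltnS ltn_ord.
Qed.

Lemma T_sup n : Tmat s n n.+1 = 1.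
Proof.
rewrite /Tmat big_ord_recr /= hs.2 tri_diag mulr1 big1 ?add0r // => k _.
by rewrite tri_lower ?mulr0 // ltnS ltn_ord.
Qed.

Lemma T_rel n j : \sum_(m < n.+2) Tmat s n m * s m j =
  (if j is j'.+1 then s n j' else 0).
Proof.
rewrite /Tmat.
under eq_bigr => m _ do rewrite mulr_suml.
rewrite exchange_big /=.
transitivity (\sum_(k < n.+1) s n k * ((k.+1 : nat) == j)%:R).
  apply: eq_bigr => k _.
  rewrite -(tri_rowL k.+1 j) mulr_sumr.
  rewrite (@sum_restrict k.+2 n.+2 (fun m => s n k * tri_inv s k.+1 m * s m j)).
  - by apply: eq_bigr => m _; rewrite mulrA.
  - by rewrite ltnS ltn_ord.
  - by move=> m km _; rewrite tri_lower ?mulr0 ?mul0r.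
case: j => [|j'].
  by rewrite big1 // => k _; rewrite mulr0.
under eq_bigr => k _ do rewrite eqSS.
rewrite sum_delta; case: ltnP => // nj; rewrite hs.1 //.
Qed.

End TriInv.
Section Alg.
Variable R : realType.
Variables (s M ds dT : nat -> nat -> R).
Hypothesis hs : lower_unitriangular s.
Hypothesis hb : forall n j, (j < n)%N -> \sum_(k < n.+1) s n k * M k j = 0.
Hypothesis hM : forall k j, M k j.+2 = M k.+1 j.
Hypothesis hdet : forall N, \det (lead_block M N) != 0.
Hypothesis hds0 : forall n k, (n <= k)%N -> ds n k = 0.
Hypothesis hdf : forall n j, (j < n)%N ->
  \sum_(k < n.+1) (s n k * M k.+1 j + M k j * ds n k) = 0.
Hypothesis hdT : forall n j,
  \sum_(m < n.+2) (Tmat s n m * ds m j + s m j * dT n m) =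
  (if j is j'.+1 then ds n j' else 0).
Hypothesis hdT1 : forall n, dT n n.+1 = 0.

Local Notation T := (Tmat s).
Let u m j := \sum_(k < m.+1) s m k * M k j.

Lemma split_sum_low (F : nat -> R) n k : (forall m, (m < n)%N -> F m = 0) ->
  \sum_(m < n + k) F m = \sum_(i < k) F (n + i)%N.
Proof.
move=> hF; rewrite big_split_ord /= big1 ?add0r // => i _; exact: hF.
Qed.

Lemma split2 (F : nat -> R) n : (forall m, (m < n)%N -> F m = 0) ->
  \sum_(m < n.+2) F m = F n + F n.+1.
Proof.
move=> hF; rewrite -addn2 split_sum_low //.
by rewrite !big_ord_recr big_ord0 /= add0r addn0 addn1.
Qed.

Lemma split3 (F : nat -> R) n : (forall m, (m < n)%N -> F m = 0) ->
  \sum_(m < n.+3) F m = F n + F n.+1 + F n.+2.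
Proof.
move=> hF; rewrite -addn3 split_sum_low //.
by rewrite !big_ord_recr big_ord0 /= add0r addn0 addn1 addn2.
Qed.

Lemma split4 (F : nat -> R) n : (forall m, (m < n)%N -> F m = 0) ->
  \sum_(m < n.+4) F m = F n + F n.+1 + F n.+2 + F n.+3.
Proof.
move=> hF; rewrite -addn4 split_sum_low //.
by rewrite !big_ord_recr big_ord0 /= add0r addn0 addn1 addn2 addn3.
Qed.

Lemma u_low m j : (j < m)%N -> u m j = 0.
Proof. exact: hb. Qed.

Lemma key_shift n j :
  \sum_(k < n.+1) s n k * M k.+1 j = \sum_(m < n.+2) T n m * u m j.
Proof.
transitivity (\sum_(k < n.+1) (\sum_(m < n.+2) T n m * s m k.+1) * M k.+1 j).
  by apply: eq_bigr => k _; rewrite T_rel.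
under eq_bigr do rewrite mulr_suml.
rewrite exchange_big /=.
transitivity (\sum_(m < n.+2) T n m * (u m j - s m 0%N * M 0%N j)).
  apply: eq_bigr => m _; rewrite /u.
  rewrite -(@sum_restrict _ m.+1 n.+2 (fun k => s m k * M k j)); first last.
  - by move=> k mk _; rewrite hs.1 ?mul0r.
  - by rewrite ltn_ord.
  rewrite [X in _ = T n m * (X - _)]big_ord_recl /= addrAC subrr add0r mulr_sumr.
  by apply: eq_bigr => k _; rewrite mulrA.
rewrite (eq_bigr (fun m : 'I_n.+2 => T n m * u m j - T n m * (s m 0%N * M 0%N j))); last first.
  by move=> m _; rewrite mulrBr.
rewrite sumrB.
have -> : \sum_(m < n.+2) T n m * (s m 0%N * M 0%N j) = 0.
  transitivity ((\sum_(m < n.+2) T n m * s m 0%N) * M 0%N j).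
    by rewrite mulr_suml; apply: eq_bigr => m _; rewrite mulrA.
  by rewrite T_rel //= mul0r.
by rewrite subr0.
Qed.

Lemma sumTu_restrict n j : (j < n)%N ->
  \sum_(m < n.+2) T n m * u m j = \sum_(m < n) T n m * u m j.
Proof.
move=> jn; apply: (@sum_restrict _ n n.+2 (fun m => T n m * u m j)); first by rewrite ltnW. move=> m nm _.
by rewrite u_low ?mulr0 //; apply: leq_trans nm.
Qed.

Lemma sumTs_M N n j : (forall m, (N <= m)%N -> (m < N)%N -> True) ->
  \sum_(k < N) (\sum_(m < N) T n m * s m k) * M k j =
  \sum_(m < N) T n m * u m j.
Proof.
move=> _; under eq_bigr do rewrite mulr_suml.
rewrite exchange_big /=; apply: eq_bigr => m _.
rewrite /u mulr_sumr (@sum_restrict _ m.+1 N (fun k => T n m * s m k * M k j)).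
- by apply: eq_bigr => k _; rewrite mulrA.
- exact: ltn_ord.
- by move=> k mk _; rewrite hs.1 ?mulr0 ?mul0r.
Qed.

Lemma hess n p : (p.+3 <= n)%N -> T n p = 0.
Proof.
move=> pn.
have [N nN] : exists N, n = N.+2.
  by exists n.-2; case: n pn => [|[|n]].
subst n; have pN : (p < N)%N by rewrite -ltnS -ltnS.
apply: (@vec_zero _ N (T N.+2) s) => //; first by rewrite lead_det // oner_neq0.
move=> k0 k0N.
apply: (@vec_zero _ N (fun k => \sum_(m < N) T N.+2 m * s m k) M (hdet N)) => // j jN.
rewrite (sumTs_M _ _ (fun _ _ _ => I)).
have H0 : \sum_(m < N.+4) T N.+2 m * u m j = 0.
  rewrite -key_shift.
  have -> : \sum_(k < N.+3) s N.+2 k * M k.+1 j = \sum_(k < N.+3) s N.+2 k * M k j.+2.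
    by apply: eq_bigr => k _; rewrite hM.
  by apply: hb; rewrite !ltnS.
rewrite -[RHS]H0 (@sum_restrict _ N N.+4 (fun m => T N.+2 m * u m j)) //.
  by rewrite -addn4 leq_addr.
by move=> m Nm _; rewrite u_low ?mulr0 //; apply: leq_trans Nm.
Qed.

Lemma DSf n k : ds n k = - \sum_(m < n) T n m * s m k.
Proof.
case: (ltnP k n) => kn; last first.
  rewrite hds0 // big1 ?oppr0 // => m _; rewrite hs.1 ?mulr0 //.
  by apply: leq_trans kn.
suff : ds n k + \sum_(m < n) T n m * s m k = 0.
  by move/eqP; rewrite addr_eq0 => /eqP.
apply: (@vec_zero _ n (fun kk => ds n kk + \sum_(m < n) T n m * s m kk) M (hdet n) _ k kn) => j jn.
under eq_bigr do rewrite mulrDl.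
rewrite big_split /= (sumTs_M _ _ (fun _ _ _ => I)).
have H := hdf jn; rewrite big_split /= key_shift sumTu_restrict // in H.
have -> : \sum_(k < n) ds n k * M k j = \sum_(k < n.+1) M k j * ds n k.
  by rewrite big_ord_recr /= hds0 // mulr0 addr0; apply: eq_bigr => i _; rewrite mulrC.
by rewrite addrC.
Qed.

Lemma ds_top1 n : ds n.+1 n = - T n.+1 n.
Proof.
rewrite DSf big_ord_recr /= hs.2 mulr1 big1 ?add0r // => m _.
by rewrite hs.1 ?mulr0.
Qed.

Lemma ds_top2 n : ds n.+2 n = - (T n.+2 n + T n.+2 n.+1 * s n.+1 n).
Proof.
rewrite DSf (@split2 (fun m => T n.+2 m * s m n)); last first.
  by move=> m mn; rewrite hs.1 ?mulr0.
by rewrite hs.2 mulr1.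
Qed.

Lemma ds_top3 n : ds n.+3 n = - (T n.+3 n.+1 * s n.+1 n + T n.+3 n.+2 * s n.+2 n).
Proof.
rewrite DSf (@split3 (fun m => T n.+3 m * s m n)); last first.
  by move=> m mn; rewrite hs.1 ?mulr0.
by rewrite hess // mul0r add0r.
Qed.

Lemma rel_nn n : T n n + s n.+1 n = (if n is n'.+1 then s n n' else 0).
Proof.
have H := T_rel hs n n.
rewrite (@split2 (fun m => T n m * s m n)) in H; last first.
  by move=> m mn; rewrite hs.1 ?mulr0.
by rewrite hs.2 mulr1 T_sup // mul1r in H.
Qed.

Lemma rel_n1 n : T n.+1 n + T n.+1 n.+1 * s n.+1 n + s n.+2 n =
  (if n is n'.+1 then s n.+1 n' else 0).
Proof.
have H := T_rel hs n.+1 n.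
rewrite (@split3 (fun m => T n.+1 m * s m n)) in H; last first.
  by move=> m mn; rewrite hs.1 ?mulr0.
by rewrite hs.2 mulr1 T_sup // mul1r in H.
Qed.

Let G n j m := Tmat s n m * ds m j + s m j * dT n m.

Lemma G_low n j m : (m < j)%N -> G n j m = 0.
Proof. by move=> mj; rewrite /G hds0 ?(ltnW mj) // hs.1 // mulr0 mul0r addr0. Qed.

Lemma dalpha n : dT n n = T n.+1 n - (if n is n'.+1 then T n n' else 0).
Proof.
have H := hdT n n.
rewrite (@split2 (G n n)) in H; last exact: G_low.
rewrite /G hds0 // hs.2 T_sup // hdT1 ds_top1 in H.
case: n H => [|n] H; rewrite ?ds_top1 in H; lra.
Qed.

Lemma dbeta n : dT n.+1 n = T n.+2 n - (if n is n'.+1 then T n.+1 n' else 0)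
  + T n.+1 n * (T n.+1 n.+1 - T n n).
Proof.
have H := hdT n.+1 n.
rewrite (@split3 (G n.+1 n)) in H; last exact: G_low.
rewrite /G hds0 // hs.2 T_sup // hdT1 ds_top1 ds_top2 dalpha /= in H.
have R0 := rel_nn n.
case: n H R0 => [|n] /= H R0.
  have -> : T 0%N 0%N = - s 1%N 0%N by lra.
  lra.
rewrite ds_top2 in H.
have -> : T n.+1 n.+1 = s n.+1 n - s n.+2 n.+1 by lra.
lra.
Qed.

Lemma dgamma n : dT n.+2 n = T n.+2 n * (T n.+2 n.+2 - T n n).
Proof.
have H := hdT n.+2 n.
rewrite (@split4 (G n.+2 n)) in H; last exact: G_low.
rewrite /G hds0 // hs.2 T_sup // hdT1 ds_top1 ds_top2 ds_top3 dalpha dbeta /= in H.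
have R0 := rel_nn n.
have R1 := rel_n1 n.
case: n H R0 R1 => [|n] /= H R0 R1.
  have e1 : T 0%N 0%N = - s 1%N 0%N by lra.
  have e2 : s 2%N 0%N = - T 1%N 0%N - T 1%N 1%N * s 1%N 0%N by lra.
  rewrite e1; rewrite e2 in H; lra.
rewrite ds_top3 in H.
have e1 : T n.+1 n.+1 = s n.+1 n - s n.+2 n.+1 by lra.
have e2 : s n.+3 n.+1 = s n.+2 n - T n.+2 n.+1 - T n.+2 n.+2 * s n.+2 n.+1.
  lra.
rewrite e1; rewrite e2 in H; lra.
Qed.

End Alg.
Section Final.
Variable R : realType.

Definition thv (e1 e2 : R) (f : R -> R -> R) : R :=
  e1 * 'D_1 (fun t => f t e2) e1 + e2 * 'D_1 (fun t => f e1 t) e2.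

Lemma th_thv e1 e2 f v : th e1 e2 f v -> v = thv e1 e2 f.
Proof.
move=> [d1 [d2 [h1 [h2 h3]]]]; rewrite -h3 /thv.
by move: h1 h2 => [_ ->] [_ ->].
Qed.

Lemma thable_thv e1 e2 f : thable e1 e2 f -> th e1 e2 f (thv e1 e2 f).
Proof. by move=> [v hv]; rewrite -(th_thv hv). Qed.

Lemma GB_low (M S St : nat -> nat -> R) H : gauss_borel M S St H ->
  forall n j, (j < n)%N -> \sum_(k < n.+1) S n k * M k j = 0.
Proof.
move=> [hS [hSt hE]] n.
elim/ltn_ind => j IH jn.
have := hE n j; rewrite eq_sym (ltn_eqF jn) /=.
rewrite (eq_bigr (fun j0 : 'I_j.+1 => (\sum_(k < n.+1) S n k * M k j0) * St j j0)); last first.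
  by move=> j0 _; rewrite mulr_suml.
rewrite big_ord_recr /= hSt.2 mulr1 big1 ?add0r // => j0 _.
by rewrite IH ?mul0r //; apply: ltn_trans jn.
Qed.

Lemma GB_row (M S : nat -> nat -> R) n k (kn : (k < n)%N) :
  lower_unitriangular S ->
  (forall n j, (j < n)%N -> \sum_(k < n.+1) S n k * M k j = 0) ->
  \det (lead_block M n) != 0 ->
  S n k = - \sum_(i < n) M n i * invmx (lead_block M n) i (Ordinal kn).
Proof.
move=> hS hb hd.
set A := lead_block M n; have Au : A \in unitmx by rewrite unitmxE unitfE.
pose r : 'rV[R]_n := \row_(i < n) S n i.
pose m : 'rV[R]_n := \row_(i < n) M n i.
have hr : r *m A = - m.
  apply/rowP => j; rewrite !mxE.
  have := hb n j (ltn_ord j); rewrite big_ord_recr /= hS.2 mul1r => /eqP.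
  rewrite addr_eq0 => /eqP <-; apply: eq_bigr => i _; by rewrite !mxE.
have : r = - m *m invmx A by rewrite -hr mulmxK.
move/rowP/(_ (Ordinal kn)); rewrite !mxE => ->.
rewrite -sumrN; apply: eq_bigr => i _; by rewrite !mxE mulNr.
Qed.

End Final.


Local Close Scope classical_set_scope.
Unset Implicit Arguments.
Set Strict Implicit.

Theorem mainTheorem13 (R : realType) (b1 b2 cs : seq R) (U : set (R * R))
  (Sm St : R -> R -> nat -> nat -> R) (H : R -> R -> nat -> R) :
  (forall c, c \in cs -> forall m : nat, c != - m%:R) ->
  open U ->
  (forall e1 e2, U (e1, e2) -> forall p : nat,
     cvgn (series (mom_term b1 cs e1 p)) /\ cvgn (series (mom_term b2 cs e2 p))) ->
  (forall e1 e2, U (e1, e2) -> forall N : nat,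
     \det (lead_block (moment b1 b2 cs e1 e2) N) != 0) ->
  (forall e1 e2, U (e1, e2) ->
     gauss_borel (moment b1 b2 cs e1 e2) (Sm e1 e2) (St e1 e2) (H e1 e2)) ->
  forall e1 e2, U (e1, e2) -> forall n : nat,
    [/\ theta_eq (fun x y => rec_alpha (Sm x y) n) e1 e2
          (rec_beta (Sm e1 e2) n.+1 - rec_beta (Sm e1 e2) n),
        theta_eq (fun x y => rec_beta (Sm x y) n.+1) e1 e2
          (rec_gamma (Sm e1 e2) n.+2 - rec_gamma (Sm e1 e2) n.+1
           + rec_beta (Sm e1 e2) n.+1
             * (rec_alpha (Sm e1 e2) n.+1 - rec_alpha (Sm e1 e2) n))
      & theta_eq (fun x y => rec_gamma (Sm x y) n.+2) e1 e2
          (rec_gamma (Sm e1 e2) n.+2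
           * (rec_alpha (Sm e1 e2) n.+2 - rec_alpha (Sm e1 e2) n))].
Proof.
move=> _ Uo hconv hdet hgb e1 e2 Ue n.
pose Mx x y := moment b1 b2 cs x y.
have hsU x y : U (x, y) -> lower_unitriangular (Sm x y).
  by move=> Uxy; case: (hgb x y Uxy).
have hbU x y : U (x, y) -> forall n j, (j < n)%N ->
    \sum_(k < n.+1) Sm x y n k * Mx x y k j = 0.
  by move=> Uxy; apply: GB_low (hgb x y Uxy).
have thm i j : th e1 e2 (fun x y => Mx x y i j) (Mx e1 e2 i.+1 j).
  exact: (th_moment Uo Ue hconv).
have thmA i j : thable e1 e2 (fun x y => Mx x y i j) by eexists; exact: thm.
have S_th p k : thable e1 e2 (fun x y => Sm x y p k).
  case: (ltnP k p) => kp.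
    apply: (thable_ext Uo Ue (f := fun x y => - \sum_(i < p) Mx x y p i *
        invmx (lead_block (Mx x y) p) i (Ordinal kp))).
      move=> x y Uxy; rewrite (GB_row kp (hsU x y Uxy) (hbU x y Uxy)) //.
      exact: hdet.
    apply: thable_opp; apply: thable_sum => i; apply: thable_mul; first exact: thmA.
    apply: (thable_invmx Uo Ue (A := fun x y => lead_block (Mx x y) p)).
      by move=> i0 j0; apply: (thable_ext Uo Ue (f := fun x y => Mx x y i0 j0)) => // x y _; rewrite mxE.
    by move=> x y Uxy; rewrite unitmxE unitfE; exact: hdet.
  apply: (thable_ext Uo Ue (f := fun _ _ => if k == p then 1 else 0)); last exact: thable_cst.
  move=> x y Uxy; case: eqP => [->|/eqP kp']; first by rewrite (hsU x y Uxy).2.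
  by rewrite (hsU x y Uxy).1 // ltn_neqAle eq_sym kp' kp.
have T_th p m : thable e1 e2 (fun x y => Tmat (Sm x y) p m).
  rewrite /Tmat; apply: thable_sum => k; apply: thable_mul; first exact: S_th.
  rewrite /tri_inv.
  apply: (thable_invmx Uo Ue (A := fun x y => lead_block (Sm x y) (maxn k.+1 m).+1)).
    by move=> i0 j0; apply: (thable_ext Uo Ue (f := fun x y => Sm x y i0 j0)) => // x y _; rewrite mxE.
  by move=> x y Uxy; apply: lead_unit; exact: hsU.
pose s := Sm e1 e2.
pose M := Mx e1 e2.
pose ds p k := thv e1 e2 (fun x y => Sm x y p k).
pose dT p m := thv e1 e2 (fun x y => Tmat (Sm x y) p m).
have hs : lower_unitriangular s by exact: hsU.
have hb : forall p j, (j < p)%N -> \sum_(k < p.+1) s p k * M k j = 0 by exact: hbU.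
have hM : forall k j, M k j.+2 = M k.+1 j.
  by move=> k j; rewrite /M /Mx /moment /= negbK !addnS.
have hdetM : forall N, \det (lead_block M N) != 0 by exact: hdet.
have hds0 : forall p k, (p <= k)%N -> ds p k = 0.
  move=> p k pk; apply/esym/th_thv.
  apply: (th_ext Uo Ue (f := fun _ _ => if k == p then 1 else 0)); last exact: th_cst.
  move=> x y Uxy; case: eqP => [->|/eqP kp']; first by rewrite (hsU x y Uxy).2.
  by rewrite (hsU x y Uxy).1 // ltn_neqAle eq_sym kp' pk.
have hdf : forall p j, (j < p)%N ->
    \sum_(k < p.+1) (s p k * M k.+1 j + M k j * ds p k) = 0.
  move=> p j jp.
  have h1 : th e1 e2 (fun x y => \sum_(k < p.+1) Sm x y p k * Mx x y k j)
      (\sum_(k < p.+1) (s p k * M k.+1 j + M k j * ds p k)).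
    by apply: th_sum => k; apply: th_mul; [exact: thable_thv | exact: thm].
  have h0 : th e1 e2 (fun x y => \sum_(k < p.+1) Sm x y p k * Mx x y k j) 0.
    apply: (th_ext Uo Ue (f := fun _ _ => 0)); last exact: th_cst.
    by move=> x y Uxy; rewrite hbU.
  exact: th_uniq h1 h0.
have hdT : forall p j,
    \sum_(m < p.+2) (Tmat s p m * ds m j + s m j * dT p m) =
    (if j is j'.+1 then ds p j' else 0).
  move=> p j.
  have h1 : th e1 e2 (fun x y => \sum_(m < p.+2) Tmat (Sm x y) p m * Sm x y m j)
      (\sum_(m < p.+2) (Tmat s p m * ds m j + s m j * dT p m)).
    by apply: th_sum => m; apply: th_mul; exact: thable_thv.
  have h0 : th e1 e2 (fun x y => \sum_(m < p.+2) Tmat (Sm x y) p m * Sm x y m j)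
      (if j is j'.+1 then ds p j' else 0).
    case: j h1 => [|j'] h1.
      apply: (th_ext Uo Ue (f := fun _ _ => 0)); last exact: th_cst.
      by move=> x y Uxy; rewrite T_rel //; exact: hsU.
    apply: (th_ext Uo Ue (f := fun x y => Sm x y p j')); last exact: thable_thv.
    by move=> x y Uxy; rewrite T_rel //; exact: hsU.
  exact: th_uniq h1 h0.
have hdT1 : forall p, dT p p.+1 = 0.
  move=> p; apply/esym/th_thv.
  apply: (th_ext Uo Ue (f := fun _ _ => 1)); last exact: th_cst.
  by move=> x y Uxy; rewrite T_sup //; exact: hsU.
have Da := dalpha hs hb hdetM hds0 hdf hdT hdT1.
have Db := dbeta hs hb hdetM hds0 hdf hdT hdT1.
have Dg := dgamma hs hb hM hdetM hds0 hdf hdT hdT1.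
have g2 : forall S : nat -> nat -> R, forall p, rec_gamma S p.+2 = Tmat S p.+2 p.
  by move=> S p; rewrite /rec_gamma /= ?subSS ?subn0.
split.
- have := thable_thv (T_th n n); rewrite -/(dT n n) Da.
  by case: n {Da Db Dg} => [|n] //.
- have := thable_thv (T_th n.+1 n); rewrite -/(dT n.+1 n) Db.
  rewrite /rec_beta /rec_alpha g2.
  by case: n {Da Db Dg} => [|n] //; rewrite g2.
- have := thable_thv (T_th n.+2 n); rewrite -/(dT n.+2 n) Dg.
  rewrite g2 /rec_alpha => h.
  by apply: th_eqf h => x y; rewrite g2.
Qed.
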